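(* Let $\mathbf X=\{X_n\}$ and $\mathbf Y=\{Y_n\}$ be general sources. If $\mathbf X$ is an approximating source for $\mathbf Y$, then $$\inf_{m>0}\ \liminf_{n\to\infty}\ \inf_{c\in\mathbb R}\Big\{\Pr\Big\{\log\tfrac{1}{P_{Y_n}(Y_n)}<c+m\Big\}-\Pr\Big\{\log\tfrac{1}{P_{X_n}(X_n)}<c\Big\}\Big\}\ \ge 0 .$$
   Context: Logarithms are natural. A general source $\mathbf X=\{X_n\}_{n\ge1}$ is a sequence of random variables, $X_n$ taking values in a countable set $\mathcal X_n$, with no consistency requirements between different $n$. Similarly $Y_n$ takes values in a countable set $\mathcal Y_n$. The variational distance is $d(P,Q)=\sum_a|P(a)-Q(a)|$. $\mathbf X$ is an approximating source for $\mathbf Y$ if there exist deterministic maps $\phi_n:\mathcal X_n\to\mathcal Y_n$ with $\lim_{n\to\infty}d(P_{Y_n},P_{\phi_n(X_n)})=0$. *)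

(* Defs.v *)
From Stdlib Require Import Reals Lra Classical ClassicalEpsilon.
Open Scope R_scope.

(* Alphabets: every countable set X_n is identified (via an injection) with a
   subset of nat; a random variable X_n is represented by its distribution
   P_{X_n} : nat -> R (points outside the image of X_n get probability 0). *)

(* Sum of a series over nat (value of the series if it converges, 0 otherwise). *)
Definition series (f : nat -> R) : R :=
  match excluded_middle_informative (exists l, infinite_sum f l) with
  | left h => proj1_sig (constructive_indefinite_description _ h)
  | right _ => 0
  end.

Definition is_dist (P : nat -> R) : Prop :=
  (forall a, 0 <= P a) /\ infinite_sum P 1.

Definition vdist (P Q : nat -> R) : R := series (fun a => Rabs (P a - Q a)).

Definition pushforward (P : nat -> R) (phi : nat -> nat) : nat -> R :=
  fun y => series (fun x => if Nat.eq_dec (phi x) y then P x else 0).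

Definition prob_info_lt (P : nat -> R) (t : R) : R :=
  series (fun a => if Rlt_dec 0 (P a) then
                     if Rlt_dec (ln (/ P a)) t then P a else 0
                   else 0).

Definition approximating (PX PY : nat -> nat -> R) : Prop :=
  exists phi : nat -> nat -> nat,
    Un_cv (fun n => vdist (PY n) (pushforward (PX n) (phi n))) 0.

(* Infimum / supremum of a set of reals (0 if it does not exist in R). *)
Definition is_inf (E : R -> Prop) (l : R) : Prop :=
  (forall x, E x -> l <= x) /\ (forall b, (forall x, E x -> b <= x) -> b <= l).
Definition is_sup (E : R -> Prop) (l : R) : Prop :=
  (forall x, E x -> x <= l) /\ (forall b, (forall x, E x -> x <= b) -> l <= b).

Definition Rinf (E : R -> Prop) : R :=
  match excluded_middle_informative (exists l, is_inf E l) with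
  | left h => proj1_sig (constructive_indefinite_description _ h)
  | right _ => 0
  end.
Definition Rsup (E : R -> Prop) : R :=
  match excluded_middle_informative (exists l, is_sup E l) with
  | left h => proj1_sig (constructive_indefinite_description _ h)
  | right _ => 0
  end.

Definition Rliminf (a : nat -> R) : R :=
  Rsup (fun y => exists N : nat,
          y = Rinf (fun z => exists n : nat, (N <= n)%nat /\ z = a n)).

(* Main.v *)
Require Import Defs.
From Stdlib Require Import Reals Lra Lia Classical ClassicalEpsilon.
Open Scope R_scope.

Lemma series_eq f l : infinite_sum f l -> series f = l.
Proof.
  intros H. unfold series. destruct excluded_middle_informative as [h|h].
  - destruct (constructive_indefinite_description _ h) as [l' Hl']; simpl.
    exact (uniqueness_sum _ _ _ Hl' H).
  - exfalso; apply h; eauto.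
Qed.

Lemma cv_le u l B : Un_cv u l -> (forall n, u n <= B) -> l <= B.
Proof.
  intros Hc Hb. destruct (Rle_or_lt l B) as [|H]; auto.
  destruct (Hc (l - B)) as [N HN]; [lra|].
  specialize (HN N (le_n N)). specialize (Hb N). unfold Rdist in HN.
  apply Rabs_def2 in HN. lra.
Qed.

Lemma cv_ge u l B : Un_cv u l -> (forall n, B <= u n) -> B <= l.
Proof.
  intros Hc Hb. destruct (Rle_or_lt B l) as [|H]; auto.
  destruct (Hc (B - l)) as [N HN]; [lra|].
  specialize (HN N (le_n N)). specialize (Hb N). unfold Rdist in HN.
  apply Rabs_def2 in HN. lra.
Qed.

Lemma series_nonneg f : (forall a, 0 <= f a) -> 0 <= series f.
Proof.
  intros Hf. unfold series. destruct excluded_middle_informative as [h|h]; [|lra].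
  destruct (constructive_indefinite_description _ h) as [l' Hl']; simpl.
  apply (cv_ge _ _ _ Hl'). intros; apply cond_pos_sum; auto.
Qed.

Lemma nonneg_bounded f B : (forall a, 0 <= f a) -> (forall N, sum_f_R0 f N <= B) ->
  infinite_sum f (series f) /\ (forall N, sum_f_R0 f N <= series f) /\ series f <= B.
Proof.
  intros Hf Hb.
  assert (Hg : Un_growing (sum_f_R0 f)).
  { intros n; simpl; specialize (Hf (S n)); lra. }
  destruct (growing_cv _ Hg) as [l Hl].
  { exists B. intros x [i ->]. apply Hb. }
  assert (E : series f = l) by (apply series_eq; exact Hl).
  rewrite E. split; [exact Hl|split].
  - apply growing_ineq; auto.
  - apply (cv_le _ _ _ Hl Hb).
Qed.

Lemma partial_le_series f : (forall a, 0 <= f a) -> (exists l, infinite_sum f l) ->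
  forall N, sum_f_R0 f N <= series f.
Proof.
  intros Hf [l Hl]. rewrite (series_eq _ _ Hl).
  apply growing_ineq; auto. intros n; simpl; specialize (Hf (S n)); lra.
Qed.

Lemma series_le_bound f B : (forall a, 0 <= f a) -> (forall N, sum_f_R0 f N <= B) ->
  series f <= B.
Proof. intros; apply nonneg_bounded; auto. Qed.

Lemma base (h : nat -> R) z u M :
  sum_f_R0 (fun y => h y * (if Nat.eq_dec z y then u else 0)) M =
  if Nat.leb z M then h z * u else 0.
Proof.
  induction M as [|M IH]; simpl.
  - destruct (Nat.eq_dec z 0) as [->|ne]; simpl; [ring|].
    destruct z; [lia|simpl; ring].
  - rewrite IH. destruct (Nat.eq_dec z (S M)) as [->|ne].
    + rewrite (proj2 (Nat.leb_gt (S M) M) ltac:(lia)), Nat.leb_refl. ring.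
    + destruct (Nat.leb_spec z M); destruct (Nat.leb_spec z (S M)); try lia; ring.
Qed.

Lemma ident (h : nat -> R) (X : nat -> R) (phi : nat -> nat) N M :
  sum_f_R0 (fun y => h y * sum_f_R0 (fun x => if Nat.eq_dec (phi x) y then X x else 0) N) M
  = sum_f_R0 (fun x => if Nat.leb (phi x) M then h (phi x) * X x else 0) N.
Proof.
  induction N as [|N IH].
  - simpl. apply base.
  - simpl. rewrite <- IH, <- base, <- plus_sum. apply sum_eq. intros; ring.
Qed.

Section Push.
Variable X : nat -> R.
Variable phi : nat -> nat.
Hypothesis hX : is_dist X.

Lemma X_partial N : sum_f_R0 X N <= 1.
Proof.
  destruct hX as [H1 H2]. rewrite <- (series_eq _ _ H2).
  apply partial_le_series; eauto.
Qed.

Definition fib y := fun x => if Nat.eq_dec (phi x) y then X x else 0.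

Lemma fib_nonneg y x : 0 <= fib y x.
Proof. unfold fib; destruct Nat.eq_dec; [apply hX|lra]. Qed.

Lemma fib_le y N : sum_f_R0 (fib y) N <= sum_f_R0 X N.
Proof. apply sum_Rle; intros; unfold fib; destruct Nat.eq_dec; [lra|apply hX]. Qed.

Lemma fib_sum y : infinite_sum (fib y) (pushforward X phi y)
   /\ (forall N, sum_f_R0 (fib y) N <= pushforward X phi y).
Proof.
  destruct (nonneg_bounded (fib y) 1 (fib_nonneg y)) as [A [B _]].
  { intros; eapply Rle_trans; [apply fib_le|apply X_partial]. }
  unfold pushforward; fold (fib y). auto.
Qed.

Lemma Z_nonneg y : 0 <= pushforward X phi y.
Proof. eapply Rle_trans; [|apply (proj2 (fib_sum y) 0%nat)]. apply cond_pos_sum, fib_nonneg. Qed.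

Lemma X_le_Z x : X x <= pushforward X phi (phi x).
Proof.
  eapply Rle_trans; [|apply (proj2 (fib_sum (phi x)) x)].
  destruct x as [|x]; simpl; unfold fib at 2 || unfold fib;
   destruct (Nat.eq_dec (phi _) (phi _)); try congruence.
  - lra.
  - pose proof (cond_pos_sum (fib (phi (S x))) x (fib_nonneg _)). lra.
Qed.

Lemma lim_fin (h : nat -> R) M :
  Un_cv (fun N => sum_f_R0 (fun y => h y * sum_f_R0 (fib y) N) M)
        (sum_f_R0 (fun y => h y * pushforward X phi y) M).
Proof.
  induction M as [|M IH]; simpl.
  - apply CV_mult; [intros e he; exists 0%nat; intros; unfold Rdist; rewrite Rminus_diag, Rabs_R0; lra|].
    apply fib_sum.
  - apply CV_plus; auto.
    apply CV_mult; [intros e he; exists 0%nat; intros; unfold Rdist; rewrite Rminus_diag, Rabs_R0; lra|].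
    apply fib_sum.
Qed.

Lemma Z_partial M : sum_f_R0 (pushforward X phi) M <= 1.
Proof.
  pose proof (lim_fin (fun _ => 1) M) as L.
  replace (sum_f_R0 (pushforward X phi) M) with
     (sum_f_R0 (fun y => 1 * pushforward X phi y) M) by (apply sum_eq; intros; ring).
  apply (cv_le _ _ _ L). intros N. unfold fib.
  rewrite ident. eapply Rle_trans; [|apply (X_partial N)].
  apply sum_Rle; intros. destruct Nat.leb; [lra|apply hX].
Qed.

Lemma Z_sum : infinite_sum (pushforward X phi) (series (pushforward X phi))
  /\ (forall N, sum_f_R0 (pushforward X phi) N <= series (pushforward X phi))
  /\ series (pushforward X phi) <= 1.
Proof. apply nonneg_bounded; [apply Z_nonneg|apply Z_partial]. Qed.

End Push.

Definition pinf (P : nat -> R) t a :=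
  if Rlt_dec 0 (P a) then if Rlt_dec (ln (/ P a)) t then P a else 0 else 0.

Lemma pinf_nonneg P t a : 0 <= pinf P t a.
Proof. unfold pinf; repeat destruct Rlt_dec; lra. Qed.

Lemma pinf_le P t a : 0 <= P a -> pinf P t a <= P a.
Proof. unfold pinf; repeat destruct Rlt_dec; lra. Qed.

Lemma pinf_sum P t : (forall a, 0 <= P a) -> (forall N, sum_f_R0 P N <= 1) ->
  exists l, infinite_sum (pinf P t) l.
Proof.
  intros H0 H1. destruct (nonneg_bounded (pinf P t) 1 (pinf_nonneg P t)) as [A _]; eauto.
  intros N; eapply Rle_trans; [|apply (H1 N)]. apply sum_Rle; intros; apply pinf_le; auto.
Qed.

Lemma sum_lin f g k N : sum_f_R0 (fun i => f i + k * g i) N = sum_f_R0 f N + k * sum_f_R0 g N.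
Proof. induction N; simpl; [|rewrite IHN]; ring. Qed.

Lemma bound_phi (phi : nat -> nat) N : exists M, forall x, (x <= N)%nat -> (phi x <= M)%nat.
Proof.
  induction N as [|N [M HM]].
  - exists (phi 0%nat); intros x Hx; replace x with 0%nat by lia; lia.
  - exists (Nat.max M (phi (S N))). intros x Hx.
    destruct (Nat.eq_dec x (S N)) as [->|ne]; [lia|]. specialize (HM x ltac:(lia)); lia.
Qed.

Lemma ln_inv_le a b : 0 < a -> a <= b -> ln (/ b) <= ln (/ a).
Proof.
  intros Ha Hab. assert (0 < b) by lra.
  rewrite !ln_Rinv by lra. destruct (Req_dec a b) as [->|ne]; [lra|].
  pose proof (ln_increasing a b Ha ltac:(lra)). lra.
Qed.

Lemma step1 X phi c : is_dist X ->
  prob_info_lt X c <= series (pinf (pushforward X phi) c).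
Proof.
  intros hX. set (Z := pushforward X phi).
  unfold prob_info_lt. fold (pinf X c).
  apply series_le_bound; [apply pinf_nonneg|]. intros N.
  destruct (bound_phi phi N) as [M HM].
  set (h := fun y => if Rlt_dec 0 (Z y) then if Rlt_dec (ln (/ Z y)) c then 1 else 0 else 0).
  assert (hnn : forall y, 0 <= h y) by (intros; unfold h; repeat destruct Rlt_dec; lra).
  apply Rle_trans with (sum_f_R0 (fun x => if Nat.leb (phi x) M then h (phi x) * X x else 0) N).
  { apply sum_Rle. intros x Hx. rewrite (proj2 (Nat.leb_le _ _) (HM x Hx)).
    unfold pinf, h. pose proof (X_le_Z X phi hX x) as XZ. fold Z in XZ.
    destruct (Rlt_dec 0 (X x)); [|apply Rmult_le_pos; [repeat destruct Rlt_dec; lra|apply hX]].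
    destruct (Rlt_dec (ln (/ X x)) c); [|apply Rmult_le_pos; [repeat destruct Rlt_dec; lra|apply hX]].
    destruct (Rlt_dec 0 (Z (phi x))); [|lra].
    destruct (Rlt_dec (ln (/ Z (phi x))) c) as [|n]; [lra|].
    exfalso; apply n. pose proof (ln_inv_le _ _ r XZ). lra. }
  rewrite <- ident. fold (fib X phi).
  apply Rle_trans with (sum_f_R0 (fun y => h y * Z y) M).
  { apply sum_Rle; intros. apply Rmult_le_compat_l; auto. apply (fib_sum X phi hX). }
  replace (sum_f_R0 (fun y => h y * Z y) M) with (sum_f_R0 (pinf Z c) M).
  2:{ apply sum_eq; intros; unfold h, pinf; repeat destruct Rlt_dec; lra. }
  apply partial_le_series; [apply pinf_nonneg|].
  apply pinf_sum; [apply Z_nonneg; auto|apply Z_partial; auto].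
Qed.

Lemma em_facts m : 0 < m -> 0 < exp (- m) < 1.
Proof.
  intros. split; [apply exp_pos|]. rewrite <- exp_0. apply exp_increasing; lra.
Qed.

Lemma pointwise (y z c m : R) : 0 < m -> 0 <= y ->
  (if Rlt_dec 0 z then if Rlt_dec (ln (/ z)) c then z else 0 else 0) <=
  (if Rlt_dec 0 y then if Rlt_dec (ln (/ y)) (c + m) then y else 0 else 0)
  + / (1 - exp (- m)) * Rabs (y - z).
Proof.
  intros hm hy. destruct (em_facts m hm) as [e0 e1].
  set (k := / (1 - exp (- m))).
  assert (hk : 1 <= k).
  { unfold k. rewrite <- Rinv_1. apply Rinv_le_contravar; lra. }
  assert (ha : 0 <= Rabs (y - z)) by apply Rabs_pos.
  assert (hkz : forall w, 0 <= w -> 0 <= w + k * Rabs (y - z)).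
  { intros; pose proof (Rmult_le_pos k _ ltac:(lra) ha); lra. }
  destruct (Rlt_dec 0 z) as [hz|]; [|apply hkz; repeat destruct Rlt_dec; lra].
  destruct (Rlt_dec (ln (/ z)) c) as [hlz|]; [|apply hkz; repeat destruct Rlt_dec; lra].
  assert (case2 : y <= exp (- m) * z -> z <= k * Rabs (y - z)).
  { intros Hyz. rewrite Rabs_minus_sym, Rabs_right by nra.
    unfold k. apply (Rmult_le_reg_l (1 - exp (- m))); [lra|].
    rewrite <- Rmult_assoc, Rinv_r by lra. nra. }
  destruct (Rlt_dec 0 y) as [hy'|hy'].
  - destruct (Rlt_dec (ln (/ y)) (c + m)).
    + pose proof (Rle_abs (z - y)). rewrite Rabs_minus_sym in H.
      pose proof (Rmult_le_compat_r (Rabs (y - z)) 1 k ha hk). lra.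
    + apply Rnot_lt_le in n. rewrite ln_Rinv in * by lra.
      assert (ln y <= ln z - m) by lra.
      assert (y <= exp (- m) * z).
      { rewrite <- (exp_ln y), <- (exp_ln z) by lra. rewrite <- exp_plus.
        destruct (Req_dec (ln y) (ln z - m)) as [E|E].
        - rewrite E; right; f_equal; ring.
        - left; apply exp_increasing; lra. }
      apply case2 in H0. lra.
  - assert (y <= exp (- m) * z) by nra. apply case2 in H. lra.
Qed.

Lemma step2 X phi Y c m : is_dist X -> is_dist Y -> 0 < m ->
  series (pinf (pushforward X phi) c) <=
  prob_info_lt Y (c + m) + / (1 - exp (- m)) * vdist Y (pushforward X phi).
Proof.
  intros hX hY hm. set (Z := pushforward X phi).
  assert (Yp : forall N, sum_f_R0 Y N <= 1) by (apply X_partial; auto).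
  assert (Zp : forall N, sum_f_R0 Z N <= 1) by (apply Z_partial; auto).
  assert (Zn : forall a, 0 <= Z a) by (apply Z_nonneg; auto).
  assert (Yn : forall a, 0 <= Y a) by apply hY.
  unfold prob_info_lt, vdist. fold (pinf Y (c + m)).
  apply series_le_bound; [apply pinf_nonneg|]. intros N.
  apply Rle_trans with (sum_f_R0 (fun a => pinf Y (c + m) a + / (1 - exp (- m)) * Rabs (Y a - Z a)) N).
  { apply sum_Rle; intros; apply pointwise; auto. }
  rewrite sum_lin. apply Rplus_le_compat.
  - apply partial_le_series. apply pinf_nonneg. apply pinf_sum; auto.
  - destruct (em_facts m hm). apply Rmult_le_compat_l.
    { left; apply Rinv_0_lt_compat; lra. }
    apply partial_le_series; [intros; apply Rabs_pos|].
    eexists. apply (nonneg_bounded _ 2); [intros; apply Rabs_pos|].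
    intros N'. apply Rle_trans with (sum_f_R0 (fun a => Y a + 1 * Z a) N').
    + apply sum_Rle; intros. specialize (Yn n); specialize (Zn n). unfold Rabs; destruct Rcase_abs; lra.
    + rewrite sum_lin. specialize (Yp N'); specialize (Zp N'); lra.
Qed.

Lemma vdist_nonneg P Q : 0 <= vdist P Q.
Proof. apply series_nonneg; intros; apply Rabs_pos. Qed.

Lemma Rinf_ge (E : R -> Prop) L : (forall x, E x -> L <= x) -> L <= 0 -> L <= Rinf E.
Proof.
  intros H H0. unfold Rinf. destruct excluded_middle_informative as [h|h]; auto.
  destruct (constructive_indefinite_description _ h) as [l [A B]]; simpl. apply B; auto.
Qed.

Lemma Rsup_ge (E : R -> Prop) x L : E x -> L <= x -> L <= 0 -> L <= Rsup E.
Proof.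
  intros Ex H H0. unfold Rsup. destruct excluded_middle_informative as [h|h]; auto.
  destruct (constructive_indefinite_description _ h) as [l [A B]]; simpl.
  specialize (A x Ex). lra.
Qed.

Theorem lemma6 (PX PY : nat -> nat -> R)
  (hX : forall n, is_dist (PX n)) (hY : forall n, is_dist (PY n))
  (happrox : approximating PX PY) :
  0 <= Rinf (fun v => exists m : R, 0 < m /\
         v = Rliminf (fun n =>
               Rinf (fun w => exists c : R,
                       w = prob_info_lt (PY n) (c + m) - prob_info_lt (PX n) c))).
Proof.
  destruct happrox as [phi Hc].
  apply Rinf_ge; [|lra]. intros v [m [hm ->]].
  destruct (em_facts m hm) as [e0 e1].
  set (k := / (1 - exp (- m))).
  assert (hk : 0 < k) by (apply Rinv_0_lt_compat; lra).
  assert (key : forall eps, 0 < eps -> - eps <= Rliminf (fun n =>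
               Rinf (fun w => exists c : R,
                       w = prob_info_lt (PY n) (c + m) - prob_info_lt (PX n) c))).
  { intros eps he. destruct (Hc (eps / k)) as [N HN].
    { apply Rlt_gt, Rdiv_lt_0_compat; lra. }
    unfold Rliminf. eapply Rsup_ge; [exists N; reflexivity| |lra].
    apply Rinf_ge; [|lra]. intros z [n [Hn ->]].
    apply Rinf_ge; [|lra]. intros w [c ->].
    specialize (HN n Hn). unfold Rdist in HN. rewrite Rminus_0_r in HN.
    pose proof (vdist_nonneg (PY n) (pushforward (PX n) (phi n))) as Dn.
    rewrite Rabs_right in HN by lra.
    pose proof (step1 (PX n) (phi n) c (hX n)).
    pose proof (step2 (PX n) (phi n) (PY n) c m (hX n) (hY n) hm). fold k in H0.
    assert (k * vdist (PY n) (pushforward (PX n) (phi n)) < eps).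
    { apply (Rmult_lt_compat_l k) in HN; auto.
      unfold Rdiv in HN. rewrite (Rmult_comm eps), <- Rmult_assoc, Rinv_r, Rmult_1_l in HN; lra. }
    lra. }
  set (L := Rliminf _) in *.
  destruct (Rle_or_lt 0 L) as [|Hl]; auto.
  specialize (key (- L / 2) ltac:(lra)). lra.
Qed.
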